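(* For unitary modified types $\boldsymbol\mu,\boldsymbol\nu,\boldsymbol\lambda$: $r_{\boldsymbol\mu,\boldsymbol\nu}^{\boldsymbol\lambda}=0$ whenever $|\boldsymbol\lambda|>|\boldsymbol\mu|+|\boldsymbol\nu|$, and whenever $|\boldsymbol\lambda|=|\boldsymbol\mu|+|\boldsymbol\nu|$ the polynomial $r_{\boldsymbol\mu,\boldsymbol\nu}^{\boldsymbol\lambda}$ is a constant lying in $\mathbb{Z}$. Equivalently, the algebra with basis $\{K_{\boldsymbol\mu}\}$ over $\mathcal{R}_{-q}$ and multiplication $K_{\boldsymbol\mu}K_{\boldsymbol\nu}=\sum_{\boldsymbol\lambda}r_{\boldsymbol\mu,\boldsymbol\nu}^{\boldsymbol\lambda}K_{\boldsymbol\lambda}$ is filtered with $K_{\boldsymbol\mu}$ in degree $|\boldsymbol\mu|$, and its associated graded algebra has integer structure constants.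
   Context: $q$ is a fixed prime power, $\sigma(z)=z^q$ on $\mathbb{F}_{q^2}$. $U_n(\mathbb{F}_q)=\{g\in GL_n(\mathbb{F}_{q^2}): g^T\sigma(g)=\mathrm{Id}\}$, embedded in $U_{n+1}(\mathbb{F}_q)$ by $g\mapsto\operatorname{diag}(g,1)$. Elements $g\in U_n(\mathbb{F}_q)$, $g'\in U_{n'}(\mathbb{F}_q)$ have the same unitary modified type if for some $N\ge n,n'$ their images in $U_N(\mathbb{F}_q)$ are conjugate in $U_N(\mathbb{F}_q)$; a unitary modified type is such an equivalence class, with size $|\boldsymbol\mu|=\operatorname{rank}(g-\mathrm{Id})$ for $g$ in the class. $X_{\boldsymbol\mu,n}$ is the sum of all elements of $U_n(\mathbb{F}_q)$ of modified type $\boldsymbol\mu$. $[n]_{-q}=((-q)^n-1)/(-q-1)$; $\mathcal{R}_{-q}$ is the $\mathbb{Z}[q,q^{-1}]$-span in $\mathbb{Q}[x]$ of $\binom{x}{k}_{-q}=\frac{x(x-[1]_{-q})\cdots(x-[k-1]_{-q})}{(-q)^{k(k-1)/2}[k]_{-q}!}$. The polynomials $r_{\boldsymbol\mu,\boldsymbol\nu}^{\boldsymbol\lambda}\in\mathcal{R}_{-q}$ are those with $X_{\boldsymbol\mu,n}X_{\boldsymbol\nu,n}=\sum_{\boldsymbol\lambda}r_{\boldsymbol\mu,\boldsymbol\nu}^{\boldsymbol\lambda}([n]_{-q})X_{\boldsymbol\lambda,n}$ for all $n\ge0$. *)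

(* Defs.v *)
From HB Require Import structures.
From mathcomp Require Import all_boot all_order all_algebra.
From Stdlib Require Import ClassicalDescription.
Set Implicit Arguments. Unset Strict Implicit. Unset Printing Implicit Defensive.
Import Order.TTheory GRing.Theory Num.Theory.
Local Open Scope ring_scope.

Definition pbool (P : Prop) : bool :=
  if excluded_middle_informative P then true else false.

Section Unitary.
Variables (q : nat) (F : finFieldType).

Definition frob (z : F) : F := z ^+ q.

(* U_n(F_q) = { g in GL_n(F_{q^2}) : g^T sigma(g) = Id } *)
Definition Umat (n : nat) : {set 'M[F]_n} :=
  [set g : 'M[F]_n | (g \in unitmx) && (g^T *m map_mx frob g == 1%:M)].

Definition stelt := {n : nat & 'M[F]_n}.

Definition unitaryE (x : stelt) : Prop := projT2 x \in Umat (projT1 x).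

(* The block-diagonal embedding g |-> diag(g, Id_{N-n}) (for n <= N),
   i.e. iterates of g |-> diag(g, 1). *)
Definition embed (n N : nat) (g : 'M[F]_n) : 'M[F]_N :=
  \matrix_(i < N, j < N)
    match (insub (val i) : option 'I_n), (insub (val j) : option 'I_n) with
    | Some i', Some j' => g i' j'
    | _, _ => ((val i == val j)%N)%:R
    end.

(* Same unitary modified type: images in some U_N (N >= n, n') are conjugate
   in U_N. *)
Definition same_type (x y : stelt) : Prop :=
  exists N : nat, [/\ (projT1 x <= N)%N, (projT1 y <= N)%N &
    exists2 u : 'M[F]_N, u \in Umat N &
      embed N (projT2 y) = u *m embed N (projT2 x) *m invmx u].

(* |mu| = rank(g - Id) for g of type mu. *)
Definition tysize (x : stelt) : nat := \rank (projT2 x - 1%:M).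

(* Group algebra Q[U_n], realized as Q-valued functions on n x n matrices
   supported on U_n, with convolution product. *)
Definition galg (n : nat) := {ffun 'M[F]_n -> rat}.

Definition gmul (n : nat) (a b : galg n) : galg n :=
  [ffun h => \sum_(g1 : 'M[F]_n) \sum_(g2 : 'M[F]_n | g1 *m g2 == h) a g1 * b g2].

(* X_{mu,n}: sum of all elements of U_n of modified type mu (mu given by a
   representative x). *)
Definition Xtype (n : nat) (x : stelt) : galg n :=
  [ffun g => (pbool (g \in Umat n /\ same_type (existT _ n g) x))%:R].

End Unitary.

Definition qint (q n : nat) : rat :=
  ((- (q%:R : rat)) ^+ n - 1) / (- (q%:R : rat) - 1).

Definition qfact (q k : nat) : rat := \prod_(i < k) qint q i.+1.

Definition qbinom_poly (q k : nat) : {poly rat} :=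
  (((- (q%:R : rat)) ^+ (k * k.-1)./2 * qfact q k)^-1)%:P *
  \prod_(i < k) ('X - (qint q i)%:P).

Definition inZqq (q : nat) (c : rat) : Prop :=
  exists (m : nat) (z : int), c = z%:~R / (q%:R ^+ m).

Definition Rq (q : nat) (P : {poly rat}) : Prop :=
  exists (K : nat) (c : 'I_K -> rat),
    (forall k, inZqq q (c k)) /\ P = \sum_(k < K) c k *: qbinom_poly q k.

Arguments Umat q {F} n.
Arguments frob q {F} z.

(* Main.v *)
Require Import Defs.
From HB Require Import structures.
From mathcomp Require Import all_boot all_order all_algebra all_field.
From Stdlib Require Import ClassicalDescription.
Set Implicit Arguments. Unset Strict Implicit. Unset Printing Implicit Defensive.
Import Order.TTheory GRing.Theory Num.Theory.
Local Open Scope ring_scope.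

Section Emb.
Variable F : finFieldType.

Lemma insub_lt m k (H : (k < m)%N) : (insub k : option 'I_m) = Some (Ordinal H).
Proof. by case: insubP => [i' _ E|/negP//]; congr Some; apply: val_inj. Qed.

Lemma insub_ge m k : ~~ (k < m)%N -> (insub k : option 'I_m) = None.
Proof. by case: insubP => [i' H _ /negP|]. Qed.

Lemma embed_lt m N (g : 'M[F]_m) (i j : 'I_N) (Hi : (i < m)%N) (Hj : (j < m)%N) :
  embed N g i j = g (Ordinal Hi) (Ordinal Hj).
Proof. by rewrite mxE (insub_lt Hi) (insub_lt Hj). Qed.

Lemma embed_ge m N (g : 'M[F]_m) (i j : 'I_N) :
  ~~ ((i < m) && (j < m))%N -> embed N g i j = ((i == j :> nat))%:R.
Proof.
rewrite negb_and => H; rewrite mxE.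
case: (boolP (i < m)%N) H => Hi /=.
  by move=> Hj; rewrite (insub_lt Hi) (insub_ge Hj).
by move=> _; rewrite (insub_ge Hi).
Qed.

Lemma embed_embed m n N (g : 'M[F]_m) : (m <= n)%N -> (n <= N)%N ->
  embed N (embed n g) = embed N g.
Proof.
move=> Hmn HnN; apply/matrixP => i j.
have [/andP[Hi Hj]|H] := boolP ((i < m) && (j < m))%N.
  have Hi' := leq_trans Hi Hmn; have Hj' := leq_trans Hj Hmn.
  by rewrite embed_lt (embed_lt (i:=Ordinal Hi') (j:=Ordinal Hj') _ Hi Hj) embed_lt.
rewrite (embed_ge _ H).
have [/andP[Hi Hj]|H'] := boolP ((i < n) && (j < n))%N.
  by rewrite embed_lt embed_ge.
by rewrite embed_ge.
Qed.

Lemma embed_id n (g : 'M[F]_n) : embed n g = g.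
Proof.
apply/matrixP => i j; rewrite (embed_lt _ (ltn_ord i) (ltn_ord j)).
by congr (g _ _); apply: val_inj.
Qed.

Lemma embed_inj m N : (m <= N)%N -> injective (@embed F m N).
Proof.
move=> H a b E; apply/matrixP => i j.
have Hi := leq_trans (ltn_ord i) H; have Hj := leq_trans (ltn_ord j) H.
have := congr1 (fun M : 'M_N => M (Ordinal Hi) (Ordinal Hj)) E => /=.
rewrite (embed_lt (i:=Ordinal Hi) (j:=Ordinal Hj) a (ltn_ord i) (ltn_ord j)).
rewrite (embed_lt (i:=Ordinal Hi) (j:=Ordinal Hj) b (ltn_ord i) (ltn_ord j)).
move=> E'.
have -> : i = Ordinal (ltn_ord i) by apply: val_inj.
have -> : j = Ordinal (ltn_ord j) by apply: val_inj.
exact: E'.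
Qed.
End Emb.
Section P.
Variable F : finFieldType.
Variables m N : nat.
Hypothesis HmN : (m <= N)%N.

Definition Pm : 'M[F]_(N, m) := \matrix_(i < N, k < m) ((i == k :> nat))%:R.

Lemma PmA_lt l (A : 'M[F]_(m, l)) (i : 'I_N) (Hi : (i < m)%N) c :
  (Pm *m A) i c = A (Ordinal Hi) c.
Proof.
rewrite mxE (bigD1 (Ordinal Hi)) //= mxE eqxx mul1r big1 ?addr0 // => k Hk.
rewrite mxE; case: eqP => [E|]; last by rewrite mul0r.
by case/eqP: Hk; apply: val_inj.
Qed.

Lemma PmA_ge l (A : 'M[F]_(m, l)) (i : 'I_N) c : ~~ (i < m)%N -> (Pm *m A) i c = 0.
Proof.
move=> Hi; rewrite mxE big1 // => k _; rewrite mxE; case: eqP => [E|]; last by rewrite mul0r.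
by move: Hi; rewrite E ltn_ord.
Qed.

Lemma APt l (A : 'M[F]_(l, m)) i j : (A *m Pm^T) i j = (Pm *m A^T) j i.
Proof. by rewrite -[A in LHS]trmxK -trmx_mul mxE. Qed.

Lemma PtP : Pm^T *m Pm = 1%:M.
Proof.
apply/matrixP => i j.
have Hi := leq_trans (ltn_ord i) HmN.
rewrite mxE (bigD1 (Ordinal Hi)) //= !mxE eqxx mul1r big1 ?addr0 // => k Hk.
rewrite !mxE; case: eqP => [E|]; last by rewrite mul0r.
by case/eqP: Hk; apply: val_inj.
Qed.

Lemma embed_P (g : 'M[F]_m) : embed N g = 1%:M + Pm *m (g - 1%:M) *m Pm^T.
Proof.
apply/matrixP => i j; rewrite [RHS]mxE [in RHS]mxE APt.
have [/andP[Hi Hj]|H] := boolP ((i < m) && (j < m))%N.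
  rewrite embed_lt (PmA_lt _ Hj) mxE (PmA_lt _ Hi) !mxE /=.
  by rewrite addrC subrK.
rewrite embed_ge //.
move: H; rewrite negb_and => /orP[Hi|Hj]; last by rewrite PmA_ge ?addr0.
have [Hj|Hj] := boolP (j < m)%N; last by rewrite PmA_ge ?addr0.
by rewrite (PmA_lt _ Hj) mxE PmA_ge ?addr0.
Qed.

Lemma embed1 : embed N (1%:M : 'M[F]_m) = 1%:M.
Proof. by rewrite embed_P subrr mulmx0 mul0mx addr0. Qed.

Lemma Pmul_aux (A B : 'M[F]_m) :
  (1%:M + Pm *m A *m Pm^T) *m (1%:M + Pm *m B *m Pm^T) =
  1%:M + Pm *m (A + B + A *m B) *m Pm^T.
Proof.
have XY : Pm *m A *m Pm^T *m (Pm *m B *m Pm^T) = Pm *m (A *m B) *m Pm^T.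
  by rewrite !mulmxA -(mulmxA _ Pm^T) PtP mulmx1.
rewrite mulmxDl !mulmxDr XY !mul1mx mulmx1 !mulmxDl.
by rewrite -addrA; congr (_ + _); rewrite addrA (addrC (Pm *m B *m Pm^T)).
Qed.

Lemma embedM (a b : 'M[F]_m) : embed N (a *m b) = embed N a *m embed N b.
Proof.
have E : a *m b - 1%:M = (a - 1%:M) + (b - 1%:M) + (a - 1%:M) *m (b - 1%:M).
  rewrite mulmxBl mulmxBr !mul1mx mulmx1.
  by rewrite [RHS]addrC [a - 1%:M + _]addrC addrA addrNK addrA addrNK.
by rewrite !embed_P E Pmul_aux.
Qed.

Lemma embed_tr (g : 'M[F]_m) : embed N g^T = (embed N g)^T.
Proof.
apply/matrixP => i j; rewrite [RHS]mxE.
have [/andP[Hi Hj]|H] := boolP ((i < m) && (j < m))%N.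
  by rewrite !embed_lt mxE.
by rewrite !embed_ge 1?eq_sym // andbC.
Qed.

Lemma rank_embed (g : 'M[F]_m) : \rank (embed N g - 1%:M) = \rank (g - 1%:M).
Proof.
rewrite embed_P [1%:M + _]addrC addrK; apply/eqP; rewrite eqn_leq; apply/andP; split.
  apply: leq_trans (mxrankM_maxl _ _) _. exact: (mxrankM_maxr Pm (g - 1%:M)).
have E : g - 1%:M = Pm^T *m (Pm *m (g - 1%:M) *m Pm^T) *m Pm.
  by rewrite !mulmxA PtP mul1mx -mulmxA PtP mulmx1.
rewrite {1}E; apply: leq_trans (mxrankM_maxl _ _) _; exact: (mxrankM_maxr Pm^T (Pm *m (g - 1%:M) *m Pm^T)).
Qed.

End P.

Section U.
Variable F : finFieldType.
Variable q : nat.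
Hypothesis hq0 : (0 < q)%N.
Hypothesis hcard : #|F| = (q ^ 2)%N.

Lemma frob01 (b : bool) : frob q (b%:R : F) = b%:R.
Proof. by case: b; rewrite /frob ?expr1n // expr0n; case: q hq0. Qed.

Lemma frobK (z : F) : frob q (frob q z) = z.
Proof. by rewrite /frob -exprM mulnn -hcard expf_card. Qed.

Lemma map_frob_embed m N (g : 'M[F]_m) :
  map_mx (frob q) (embed N g) = embed N (map_mx (frob q) g).
Proof.
apply/matrixP => i j; rewrite mxE.
have [/andP[Hi Hj]|H] := boolP ((i < m) && (j < m))%N.
  by rewrite !embed_lt mxE.
by rewrite !embed_ge // frob01.
Qed.

Lemma UmatE n (g : 'M[F]_n) : (g \in Umat q n) = (g^T *m map_mx (frob q) g == 1%:M).
Proof.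
rewrite inE; case: eqP => [H|]; last by rewrite andbF.
by rewrite andbT -unitmx_tr; case: (mulmx1_unit H).
Qed.

Lemma Umat_unit n (g : 'M[F]_n) : g \in Umat q n -> g \in unitmx.
Proof. by rewrite inE => /andP[]. Qed.

Lemma Umat1 n : (1%:M : 'M[F]_n) \in Umat q n.
Proof.
rewrite UmatE trmx1 mul1mx; apply/eqP/matrixP => i j.
by rewrite !mxE frob01.
Qed.

Lemma Umat_embed m N (g : 'M[F]_m) : (m <= N)%N ->
  (embed N g \in Umat q N) = (g \in Umat q m).
Proof.
move=> H; rewrite !UmatE -embed_tr // map_frob_embed -embedM //.
apply/eqP/eqP => [E|->]; last exact: embed1.
by apply: (embed_inj H); rewrite E embed1.
Qed.

Lemma sum_delta n (f : 'I_n -> F) (j : 'I_n) :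
  \sum_(k < n) f k * ((k == j)%:R) = f j.
Proof.
rewrite (bigD1 j) //= eqxx mulr1 big1 ?addr0 // => k /negbTE ->.
by rewrite mulr0.
Qed.

Lemma U_rows_cols n m (g : 'M[F]_n) : g \in Umat q n ->
  (forall i j : 'I_n, (m <= i)%N -> g i j = (i == j)%:R) ->
  forall i j : 'I_n, (m <= j)%N -> g i j = (i == j)%:R.
Proof.
rewrite UmatE => /eqP/mulmx1C E Hr i j Hj.
have := congr1 (fun M : 'M_n => M i j) E => /=.
rewrite !mxE.
under eq_bigr => k _ do rewrite !mxE (Hr j k Hj) eq_sym.
rewrite sum_delta => E'.
by rewrite -(frobK (g i j)) E' frob01.
Qed.

Lemma U_cols_rows n m (g : 'M[F]_n) : g \in Umat q n ->
  (forall i j : 'I_n, (m <= j)%N -> g i j = (i == j)%:R) ->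
  forall i j : 'I_n, (m <= i)%N -> g i j = (i == j)%:R.
Proof.
rewrite UmatE => /eqP E Hc i j Hi.
have := congr1 (fun M : 'M_n => M i j) E => /=.
rewrite !mxE.
under eq_bigr => k _ do rewrite !mxE (Hc k i Hi) mulrC.
rewrite sum_delta => E'.
by rewrite -(frobK (g i j)) E' frob01.
Qed.

End U.

Section K.
Variable F : finFieldType.

Lemma rank_sandwich n (u v A : 'M[F]_n) : u \in unitmx -> v \in unitmx ->
  \rank (u *m A *m v) = \rank A.
Proof.
move=> Hu Hv; apply/eqP; rewrite eqn_leq; apply/andP; split.
  apply: leq_trans (mxrankM_maxl _ _) _; exact: (mxrankM_maxr u A).
have E : A = invmx u *m (u *m A *m v) *m invmx v.
  by rewrite !mulmxA mulVmx // mul1mx -mulmxA mulmxV // mulmx1.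
rewrite {1}E; apply: leq_trans (mxrankM_maxl _ _) _; exact: (mxrankM_maxr (invmx u) (u *m A *m v)).
Qed.

Lemma rank_conj n (u A : 'M[F]_n) : u \in unitmx ->
  \rank (u *m A *m invmx u - 1%:M) = \rank (A - 1%:M).
Proof.
move=> Hu; have -> : u *m A *m invmx u - 1%:M = u *m (A - 1%:M) *m invmx u.
  by rewrite mulmxBr mulmxBl mulmx1 mulmxV.
by apply: rank_sandwich; rewrite ?unitmx_inv.
Qed.

Lemma trB1 n (g : 'M[F]_n) : g^T - 1%:M = (g - 1%:M)^T.
Proof. by rewrite linearB /= trmx1. Qed.

Lemma rank_tr1 n (g : 'M[F]_n) : \rank (g^T - 1%:M) = \rank (g - 1%:M).
Proof. by rewrite trB1 mxrank_tr. Qed.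

Lemma rank_prod n (A B : 'M[F]_n) :
  (\rank (A *m B - 1%:M)%R <= \rank (A - 1%:M)%R + \rank (B - 1%:M)%R)%N.
Proof.
have -> : A *m B - 1%:M = (A - 1%:M) *m B + (B - 1%:M).
  by rewrite mulmxBl mul1mx addrA subrK.
apply: leq_trans (mxrank_add _ _) _; rewrite leq_add2r.
exact: (mxrankM_maxl (A - 1%:M) B).
Qed.

Lemma sub_key n (A B : 'M[F]_n) : B \in unitmx ->
  \rank (A *m B - 1%:M) = (\rank (A - 1%:M)%R + \rank (B - 1%:M)%R)%N ->
  (B - 1%:M <= A *m B - 1%:M)%MS.
Proof.
move=> HB Hr.
have E : A *m B - 1%:M = (A - 1%:M) *m B + (B - 1%:M).
  by rewrite mulmxBl mul1mx addrA subrK.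
set S := ((A - 1%:M) *m B + (B - 1%:M))%MS.
have sCS : (A *m B - 1%:M <= S)%MS by rewrite E; apply: addmx_sub_adds.
have rS : (\rank S <= \rank (A *m B - 1%:M)%R)%N.
  apply: leq_trans (leq_of_leqif (mxrank_adds_leqif _ _)) _.
  by rewrite Hr mxrankMfree // row_free_unit.
have sSC : (S <= A *m B - 1%:M)%MS.
  have [_ <-] := mxrank_leqif_sup sCS.
  by rewrite eqn_leq rS mxrankS.
exact: submx_trans (addsmxSr _ _) sSC.
Qed.

Lemma sub_zero_cols n m (B C : 'M[F]_n) : (B <= C)%MS ->
  (forall i j : 'I_n, (m <= j)%N -> C i j = 0) ->
  forall i j : 'I_n, (m <= j)%N -> B i j = 0.
Proof.
move=> /submxP[D ->] HC i j Hj; rewrite mxE big1 // => k _.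
by rewrite HC ?mulr0.
Qed.

End K.

Section Key.
Variable F : finFieldType.
Variable q : nat.
Hypothesis hq0 : (0 < q)%N.
Hypothesis hcard : #|F| = (q ^ 2)%N.

Definition trunc m n (H : (m <= n)%N) (g : 'M[F]_n) : 'M[F]_m :=
  \matrix_(i, j) g (widen_ord H i) (widen_ord H j).

Lemma blk_embed m n (H : (m <= n)%N) (g : 'M[F]_n) :
  (forall i j : 'I_n, ~~ ((i < m) && (j < m))%N -> g i j = (i == j)%:R) ->
  g = embed n (trunc H g).
Proof.
move=> Hg; apply/matrixP => i j.
have [/andP[Hi Hj]|H'] := boolP ((i < m) && (j < m))%N.
  by rewrite embed_lt mxE; congr (g _ _); apply: val_inj.
by rewrite embed_ge // Hg.
Qed.

Lemma embed1_zero m n (z0 : 'M[F]_m) (i j : 'I_n) :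
  ~~ ((i < m) && (j < m))%N -> (embed n z0 - 1%:M) i j = 0.
Proof. by move=> H; rewrite mxE embed_ge // !mxE subrr. Qed.

Lemma key m n (H : (m <= n)%N) (z0 : 'M[F]_m) (g1 g2 : 'M[F]_n) :
  g1 \in Umat q n -> g2 \in Umat q n -> g1 *m g2 = embed n z0 ->
  \rank (embed n z0 - 1%:M) = (\rank (g1 - 1%:M)%R + \rank (g2 - 1%:M)%R)%N ->
  g1 = embed n (trunc H g1) /\ g2 = embed n (trunc H g2).
Proof.
move=> U1 U2 Eh Hr; split; apply: blk_embed.
- have s1 : (g1^T - 1%:M <= g2^T *m g1^T - 1%:M)%MS.
    apply: sub_key; first by rewrite unitmx_tr; exact: Umat_unit U1.
    by rewrite -trmx_mul !rank_tr1 Eh Hr addnC.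
  have c1 : forall i j : 'I_n, (m <= j)%N -> (g1^T - 1%:M) i j = 0.
    apply: (sub_zero_cols s1) => i j Hj.
    rewrite -trmx_mul Eh trB1 mxE embed1_zero //.
    by rewrite negb_and -!leqNgt Hj.
  have r1 : forall i j : 'I_n, (m <= i)%N -> g1 i j = (i == j)%:R.
    move=> i j Hi; have := c1 j i Hi; rewrite !mxE => /eqP; rewrite subr_eq0 => /eqP ->.
    by rewrite eq_sym.
  have c1' := U_rows_cols hq0 hcard U1 r1.
  move=> i j; rewrite negb_and -!leqNgt => /orP[]; [exact: r1 | exact: c1'].
- have s2 : (g2 - 1%:M <= g1 *m g2 - 1%:M)%MS.
    apply: sub_key; first exact: Umat_unit U2.
    by rewrite Eh Hr.
  have c2 : forall i j : 'I_n, (m <= j)%N -> (g2 - 1%:M) i j = 0.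
    apply: (sub_zero_cols s2) => i j Hj.
    rewrite Eh embed1_zero //.
    by rewrite negb_and -!leqNgt Hj orbT.
  have c2' : forall i j : 'I_n, (m <= j)%N -> g2 i j = (i == j)%:R.
    by move=> i j Hj; have := c2 i j Hj; rewrite !mxE => /eqP; rewrite subr_eq0 => /eqP.
  have r2 := U_cols_rows hq0 hcard U2 c2'.
  move=> i j; rewrite negb_and -!leqNgt => /orP[]; [exact: r2 | exact: c2'].
Qed.

End Key.

Lemma pbool_iff (P Q : Prop) : (P <-> Q) -> pbool P = pbool Q.
Proof.
move=> [PQ QP]; rewrite /pbool.
case: excluded_middle_informative => [p|np]; case: excluded_middle_informative => [q|nq] //.
- by case: nq; apply: PQ.
- by case: np; apply: QP.
Qed.

Lemma pbool_true (P : Prop) : pbool P -> P.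
Proof. by rewrite /pbool; case: excluded_middle_informative. Qed.

Section T.
Variable F : finFieldType.
Variable q : nat.
Hypothesis hq0 : (0 < q)%N.
Hypothesis hcard : #|F| = (q ^ 2)%N.

Lemma embed_invmx m N (H : (m <= N)%N) (u : 'M[F]_m) : u \in unitmx ->
  embed N (invmx u) = invmx (embed N u).
Proof.
move=> Hu.
have E : embed N u *m embed N (invmx u) = 1%:M by rewrite -embedM // mulmxV // embed1.
have [Hu' _] := mulmx1_unit E.
by rewrite -[LHS]mul1mx -(mulVmx Hu') -mulmxA E mulmx1.
Qed.

Lemma same_type_refl (x : stelt F) : same_type q x x.
Proof.
exists (projT1 x); split => //; exists 1%:M; first exact: Umat1.
by rewrite mul1mx invmx1 mulmx1.
Qed.

Lemma same_type_down m n (H : (m <= n)%N) (a : 'M[F]_m) (x : stelt F) :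
  same_type q (existT _ n (embed n a)) x -> same_type q (existT _ m a) x.
Proof.
case=> N [/= HnN Hx [u Uu E]]; exists N; split => //=; first exact: leq_trans HnN.
by exists u => //; rewrite E /= embed_embed.
Qed.

Lemma same_type_up m n (H : (m <= n)%N) (a : 'M[F]_m) (x : stelt F) :
  same_type q (existT _ m a) x -> same_type q (existT _ n (embed n a)) x.
Proof.
case=> N [/= HmN Hx [u Uu E]].
have HN : (N <= maxn N n)%N := leq_maxl _ _.
exists (maxn N n); split => //=; first exact: leq_maxr.
  exact: leq_trans HN.
exists (embed (maxn N n) u); first by rewrite Umat_embed.
rewrite embed_embed ?leq_maxr // -(embed_embed (projT2 x) Hx HN) E.
rewrite !embedM // embed_embed // embed_invmx //; exact: Umat_unit Uu.
Qed.

Lemma same_type_size (a b : stelt F) : same_type q a b -> tysize a = tysize b.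
Proof.
case=> N [Ha Hb [u Uu E]]; rewrite /tysize.
rewrite -(rank_embed Ha) -(rank_embed Hb) E rank_conj //; exact: Umat_unit Uu.
Qed.

Lemma Xtype_embed m n (H : (m <= n)%N) (x : stelt F) (a : 'M[F]_m) :
  Xtype q n x (embed n a) = Xtype q m x a.
Proof.
rewrite !ffunE; congr (_%:R); congr (nat_of_bool _); apply: pbool_iff; rewrite Umat_embed //.
split=> [[U S]|[U S]]; split => //.
  exact: same_type_down S.
exact: same_type_up S.
Qed.

Lemma Xtype_ne0 n (x : stelt F) (g : 'M[F]_n) : Xtype q n x g != 0 ->
  g \in Umat q n /\ same_type q (existT _ n g) x.
Proof.
rewrite ffunE; case E: (pbool _) => //= _.
by apply: pbool_true; rewrite E.
Qed.

Lemma Xtype_nat n (x : stelt F) (g : 'M[F]_n) : Xtype q n x g \is a Num.nat.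
Proof. by rewrite ffunE rpred_nat. Qed.

Lemma sum_embed m n (H : (m <= n)%N) (G : 'M[F]_n -> rat) :
  (forall g, G g != 0 -> g = embed n (trunc H g)) ->
  \sum_g G g = \sum_(a : 'M[F]_m) G (embed n a).
Proof.
move=> HG.
rewrite (bigID (fun g => g \in (@embed F m n) @: [set: 'M[F]_m])) /=.
rewrite [X in _ + X]big1 ?addr0; last first.
  move=> g Hg; apply/eqP; apply/negPn/negP => /HG E; move: Hg.
  by rewrite E imset_f ?in_setT.
rewrite big_imset /=; last by move=> a b _ _; apply: embed_inj.
by apply: eq_bigl => a; rewrite in_setT.
Qed.

Definition Fterm n (x y : stelt F) (h g1 g2 : 'M[F]_n) : rat :=
  if g1 *m g2 == h then Xtype q n x g1 * Xtype q n y g2 else 0.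

Lemma gmulE n (x y : stelt F) (h : 'M[F]_n) :
  gmul (Xtype q n x) (Xtype q n y) h = \sum_g1 \sum_g2 Fterm x y h g1 g2.
Proof. by rewrite ffunE; apply: eq_bigr => g1 _; rewrite big_mkcond. Qed.

Lemma Fterm_ne0 n (x y : stelt F) (h g1 g2 : 'M[F]_n) : Fterm x y h g1 g2 != 0 ->
  [/\ g1 *m g2 = h, g1 \in Umat q n, g2 \in Umat q n,
      \rank (g1 - 1%:M) = tysize x & \rank (g2 - 1%:M) = tysize y].
Proof.
rewrite /Fterm; case: (g1 *m g2 =P h) => [E|_]; last by rewrite eqxx.
rewrite mulf_eq0 negb_or => /andP[/Xtype_ne0[U1 S1] /Xtype_ne0[U2 S2]].
by split => //; [exact: same_type_size S1 | exact: same_type_size S2].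
Qed.

Lemma S_eq m n (H : (m <= n)%N) (x y : stelt F) (z0 : 'M[F]_m) :
  tysize (existT _ m z0) = (tysize x + tysize y)%N ->
  gmul (Xtype q n x) (Xtype q n y) (embed n z0) = gmul (Xtype q m x) (Xtype q m y) z0.
Proof.
move=> Hs; rewrite !gmulE.
have Hr : \rank (embed n z0 - 1%:M) = tysize (existT _ m z0) by rewrite rank_embed.
have K g1 g2 : Fterm x y (embed n z0) g1 g2 != 0 ->
    g1 = embed n (trunc H g1) /\ g2 = embed n (trunc H g2).
  case/Fterm_ne0 => E U1 U2 R1 R2.
  by apply: (key hq0 hcard H U1 U2 E); rewrite Hr R1 R2.
have E1 g1 : \sum_g2 Fterm x y (embed n z0) g1 g2 =
    \sum_(b : 'M[F]_m) Fterm x y (embed n z0) g1 (embed n b).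
  by apply: (sum_embed (H:=H)) => g2 /K[].
under eq_bigr => g1 _ do rewrite E1.
rewrite (sum_embed (H:=H)); last first.
  move=> g1 Hne.
  case: (boolP [exists b : 'M[F]_m, Fterm x y (embed n z0) g1 (embed n b) != 0]).
    by case/existsP => b /K[].
  move/existsPn => Hall; move: Hne; rewrite big1 ?eqxx // => b _.
  by apply/eqP; move: (Hall b); rewrite negbK.
apply: eq_bigr => a _; apply: eq_bigr => b _.
by rewrite /Fterm -embedM // (inj_eq (embed_inj H)) !Xtype_embed.
Qed.

Lemma S_zero m n (x y : stelt F) (z0 : 'M[F]_m) : (m <= n)%N ->
  (tysize x + tysize y < tysize (existT _ m z0))%N ->
  gmul (Xtype q n x) (Xtype q n y) (embed n z0) = 0.
Proof.
move=> H Hs; rewrite gmulE big1 // => g1 _; rewrite big1 // => g2 _.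
apply/eqP; apply/negPn/negP => /Fterm_ne0[E U1 U2 R1 R2].
have := rank_prod g1 g2; rewrite E rank_embed // -/(tysize (existT _ m z0)) R1 R2.
by rewrite leqNgt Hs.
Qed.

End T.

Lemma qint_inj q : (1 < q)%N -> injective (qint q).
Proof.
move=> Hq a b; rewrite /qint => E.
have Hd : (- (q%:R : rat) - 1) != 0.
  by rewrite -opprD oppr_eq0 natr1 pnatr_eq0.
have := congr1 (fun t => t * (- (q%:R : rat) - 1)) E; rewrite /= !divfK //.
move/addIr => /(congr1 (fun t : rat => `|t|)); rewrite !normrX normrN normr_nat.
rewrite -!natrX => /eqP; rewrite eqr_nat => /eqP; exact: expnI.
Qed.

Lemma poly_const q (p : {poly rat}) (c : rat) (m : nat) : (1 < q)%N ->
  (forall n, (m <= n)%N -> p.[qint q n] = c) -> p = c%:P.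
Proof.
move=> Hq Hp; apply: subr0_eq; apply/eqP; apply/negPn/negP => Hd.
set d := p - c%:P in Hd.
pose rs := map (fun i => qint q (m + i)) (seq.iota 0 (size d)).
have H := @max_poly_roots _ d rs Hd.
rewrite size_map size_iota ltnn in H; suff : false by []; apply: H.
  apply/allP => t /mapP[i _ ->] /=; rewrite /root /d hornerD hornerN hornerC Hp ?leq_addr //.
  by rewrite subrr.
rewrite map_inj_uniq ?iota_uniq // => i j /(qint_inj Hq) /addnI.
by [].
Qed.

Unset Implicit Arguments.

Theorem theorem8p7 (p k q : nat) (F : finFieldType)
  (hp : prime p) (hk : (0 < k)%N) (hq : q = (p ^ k)%N)
  (hF : #|F| = (q ^ 2)%N)
  (r : stelt F -> stelt F -> stelt F -> {poly rat})
  (* r depends only on the modified types *)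
  (r_inv : forall x x' y y' z z',
     unitaryE q x -> unitaryE q y -> unitaryE q z ->
     same_type q x x' -> same_type q y y' -> same_type q z z' ->
     r x y z = r x' y' z')
  (* r takes values in R_{-q} *)
  (r_Rq : forall x y z, unitaryE q x -> unitaryE q y -> unitaryE q z ->
     Rq q (r x y z))
  (* X_{mu,n} X_{nu,n} = sum_lambda r_{mu,nu}^lambda([n]_{-q}) X_{lambda,n},
     compared coefficientwise: the coefficient of h in U_n on the right is
     r_{mu,nu}^{type(h)}([n]_{-q}) *)
  (r_def : forall x y : stelt F, unitaryE q x -> unitaryE q y -> forall n : nat,
     gmul (Xtype q n x) (Xtype q n y) =
     [ffun h : 'M[F]_n => if h \in Umat q n
                          then (r x y (existT _ n h)).[qint q n] else 0]) :
  forall x y z : stelt F, unitaryE q x -> unitaryE q y -> unitaryE q z ->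
    ((tysize x + tysize y < tysize z)%N -> r x y z = 0) /\
    (tysize z = (tysize x + tysize y)%N -> exists c : int, r x y z = (c%:~R)%:P).
Proof.
move=> x y z ux uy uz.
have Hq1 : (1 < q)%N.
  have Hp1 := prime_gt1 hp.
  apply: leq_trans Hp1 _; rewrite hq -{1}(expn1 p) leq_pexp2l //; exact: prime_gt0.
have hq0 : (0 < q)%N by exact: ltnW.
case: z uz => m z0 uz; rewrite /unitaryE /= in uz.
have V n : (m <= n)%N -> (r x y (existT _ m z0)).[qint q n] =
    gmul (Xtype q n x) (Xtype q n y) (embed n z0).
  move=> Hn.
  have U' : unitaryE q (existT (fun n => 'M[F]_n) n (embed n z0)).
    by rewrite /unitaryE /= Umat_embed.
  have := r_def x y ux uy n; move/ffunP => /(_ (embed n z0)).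
  rewrite [X in _ = X -> _]ffunE Umat_embed // uz => ->.
  rewrite (r_inv x x y y (existT _ n (embed n z0)) (existT _ m z0)) //.
  - exact: same_type_refl.
  - exact: same_type_refl.
  - exact: same_type_up (same_type_refl hq0 _).
split.
  move=> Hlt; rewrite -polyC0; apply: (@poly_const q _ _ m) => // n Hn.
  by rewrite V // S_zero.
move=> Hs.
have Hc : r x y (existT _ m z0) = (gmul (Xtype q m x) (Xtype q m y) z0)%:P.
  apply: (@poly_const q _ _ m) => // n Hn.
  by rewrite V // (S_eq hq0 hF).
have : gmul (Xtype q m x) (Xtype q m y) z0 \is a Num.nat.
  rewrite ffunE; apply: rpred_sum => g1 _; apply: rpred_sum => g2 _.
  by apply: rpredM; apply: Xtype_nat.
case/natrP => c Ec; exists c%:Z; by rewrite Hc Ec pmulrn.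
Qed.
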